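(* Let $D$ be a delta-matroid on $E\cup\overline{E}$ for a finite set $E$. If $E=\emptyset$, then $U_D(u,v)=1$. For any $i\in E$, $$U_D(u,v)=\begin{cases}U_{D/i}(u,v)+U_{D\setminus i}(u,v)+u\,U_{D(i)}(u,v), & \text{if } i \text{ is neither a loop nor a coloop},\\ (u+v+1)\,U_{D\setminus i}(u,v), & \text{if } i \text{ is a loop or a coloop}.\end{cases}$$
   Context: For a finite $E\subseteq\{1,2,\dots\}$ let $E\cup\overline{E}$ consist of $E$ and formal copies $\overline{i}$ ($i\in E$), with involution $a\mapsto\overline{a}$; $\overline{S}=\{\overline{a}:a\in S\}$. A subset is admissible if it contains at most one of $i,\overline{i}$ for each $i$; $\operatorname{AdS}(E)$ denotes the set of admissible subsets of $E\cup\overline{E}$. In $\mathbb{R}^E$ set $e_{\overline{i}}=-e_i$, $e_S=\sum_{a\in S}e_a$. A delta-matroid on $E\cup\overline{E}$ is a nonempty collection $\mathcal{F}$ of admissible sets of size $|E|$ (feasible sets) such that $\operatorname{Conv}\{e_B:B\in\mathcal{F}\}$ has all edges parallel to some $e_i$ or $e_i\pm e_j$. Rank function: $g_D(S)=\max_{B\in\mathcal{F}}(|S\cap B|-|\overline{S}\cap B|)$. $U$-polynomial: $U_D(u,v)=\sum_{S\in\operatorname{AdS}(E)}u^{|E|-|S|}v^{(|S|-g_D(S))/2}$. For $i\in E$: $i$ is a loop if no feasible set contains $i$, a coloop if every feasible set contains $i$. If $i$ is not a loop, $D/i$ is the delta-matroid on $(E\setminus\{i\})\cup\overline{(E\setminus\{i\})}$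 with feasible sets $B\setminus\{i\}$ for feasible $B\ni i$; if $i$ is not a coloop, $D\setminus i$ has feasible sets $B\setminus\{\overline{i}\}$ for feasible $B\ni\overline{i}$; $D(i)$ has feasible sets $B\setminus\{i,\overline{i}\}$ for all feasible $B$; if $i$ is a loop or a coloop, $D/i=D\setminus i=D(i)$. *)

(* Defs.v *)
From HB Require Import structures.
From mathcomp Require Import all_boot all_order all_algebra.
From mathcomp Require Import finmap.
From Stdlib Require Import Rdefinitions.
From mathcomp Require Import Rstruct.

Set Implicit Arguments.
Unset Strict Implicit.
Unset Printing Implicit Defensive.

Import Order.TTheory GRing.Theory Num.Theory.
Local Open Scope fset_scope.
Local Open Scope ring_scope.

(* Elements of E ∪ Ē are encoded as pairs (i, b) : nat * bool :       *)
(*   (i, false) stands for i, and (i, true) stands for the copy ī.     *)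
Definition elt := (nat * bool)%type.

Definition bar (a : elt) : elt := (a.1, ~~ a.2).

Definition barS (S : {fset elt}) : {fset elt} := [fset bar a | a in S].

Definition ground (E : {fset nat}) : {fset elt} :=
  [fset (i, false) | i in E] `|` [fset (i, true) | i in E].

Definition admissible (E : {fset nat}) (S : {fset elt}) : bool :=
  (S `<=` ground E) && [forall x : S, bar (val x) \notin S].

Definition AdS (E : {fset nat}) : {fset {fset elt}} :=
  [fset S in fpowerset (ground E) | admissible E S].

(* Geometry in R^E (R = the real numbers).  Vectors are functions      *)
(* nat -> R (only coordinates in E matter); e_ī = - e_i.               *)
Definition unitv (i : nat) : nat -> R := fun l => if l == i then 1 else 0.

Definition vecS (S : {fset elt}) : nat -> R :=
  fun l => \sum_(a <- S | a.1 == l) (if a.2 then -1 else 1).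

Definition dotv (E : {fset nat}) (c : nat -> R) (S : {fset elt}) : R :=
  \sum_(l <- E) c l * vecS S l.

Definition parallel_ok (E : {fset nat}) (d : nat -> R) : Prop :=
  exists (k : R) (i j : nat), [/\ i \in E, j \in E &
    (forall l, d l = k * unitv i l) \/
    (i != j /\ forall l, d l = k * (unitv i l + unitv j l)) \/
    (i != j /\ forall l, d l = k * (unitv i l - unitv j l))].

(* Every edge of Conv{e_B : B in F} is parallel to some e_i or e_i ± e_j.
   An edge is a one-dimensional face: the set of points of the polytope
   maximising a linear functional c, when that set is a segment.  For
   two distinct vertices e_B1, e_B2 of such a face, the face is
   [e_B1, e_B2] and the edge direction is e_B2 - e_B1.                 *)
Definition edges_ok (E : {fset nat}) (F : {fset {fset elt}}) : Prop :=
  forall (c : nat -> R) (B1 B2 : {fset elt}),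
    B1 \in F -> B2 \in F -> B1 != B2 ->
    (forall B, B \in F -> dotv E c B <= dotv E c B1) ->
    dotv E c B2 = dotv E c B1 ->
    (forall B, B \in F -> dotv E c B = dotv E c B1 ->
       exists t : R, forall l, vecS B l - vecS B1 l = t * (vecS B2 l - vecS B1 l)) ->
    parallel_ok E (fun l => vecS B2 l - vecS B1 l).

Definition is_delta_matroid (E : {fset nat}) (F : {fset {fset elt}}) : Prop :=
  [/\ F != fset0,
      (forall B, B \in F -> admissible E B /\ #|` B| = #|` E|) &
      edges_ok E F].

(* g_D(S) = max_{B in F} (|S ∩ B| - |S̄ ∩ B|).  Every term is >= -|S|,
   so using -|S| as the neutral element of the max does not change the
   value when F is nonempty. *)
Definition rankD (F : {fset {fset elt}}) (S : {fset elt}) : int :=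
  \big[Num.max/ - Posz #|` S|]_(B <- F)
     (Posz #|` S `&` B| - Posz #|` barS S `&` B|).

(* bivariate integer polynomials: u is the inner variable, v the outer *)
Definition bipoly := {poly {poly int}}.
Definition uvar : bipoly := ('X)%:P.
Definition vvar : bipoly := 'X.

Definition Upoly (E : {fset nat}) (F : {fset {fset elt}}) : bipoly :=
  \sum_(S <- AdS E)
    uvar ^+ (subn #|` E| #|` S|) *
    vvar ^+ (divn (absz (Posz #|` S| - rankD F S)) 2).

Definition is_loop (F : {fset {fset elt}}) (i : nat) : bool :=
  [forall B : F, (i, false) \notin val B].
Definition is_coloop (F : {fset {fset elt}}) (i : nat) : bool :=
  [forall B : F, (i, false) \in val B].

Definition minor_mid (F : {fset {fset elt}}) (i : nat) : {fset {fset elt}} :=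
  [fset B `\` [fset (i, false); (i, true)] | B in F].

(* D/i (with the convention D/i = D(i) when i is a loop or coloop) *)
Definition contract (F : {fset {fset elt}}) (i : nat) : {fset {fset elt}} :=
  if is_loop F i || is_coloop F i then minor_mid F i
  else [fset B `\` [fset (i, false)] | B in [fset B in F | (i, false) \in B]].

(* D\i (with the convention D\i = D(i) when i is a loop or coloop) *)
Definition delete (F : {fset {fset elt}}) (i : nat) : {fset {fset elt}} :=
  if is_loop F i || is_coloop F i then minor_mid F i
  else [fset B `\` [fset (i, true)] | B in [fset B in F | (i, true) \in B]].

(* Main.v *)
Require Import Defs.
From mathcomp Require Import Rstruct.
From HB Require Import structures.
From mathcomp Require Import all_boot all_order all_algebra.
From mathcomp Require Import finmap.
From mathcomp Require Import zify ring.
Import GRing.Theory Num.Theory Order.TTheory.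
Local Open Scope fset_scope.
Local Open Scope ring_scope.

Lemma sum_pred1 (R : nmodType) (T : eqType) (s : seq T) (q : T) (g : T -> R) :
  uniq s -> \sum_(l <- s) (if l == q then g l else 0) = if q \in s then g q else 0.
Proof.
elim: s => [|a s IH] /=; first by rewrite big_nil.
move=> /andP [ans us]; rewrite big_cons IH // in_cons.
case: (eqVneq a q) => [<-|aq] /=.
  by rewrite (negbTE ans) addr0.
by rewrite add0r.
Qed.

Lemma sum_fst (R : nmodType) (A : {fset elt}) (l : nat) (g : elt -> R) :
  \sum_(a <- A | a.1 == l) g a =
  (if (l, false) \in A then g (l, false) else 0) +
  (if (l, true) \in A then g (l, true) else 0).
Proof.
rewrite big_mkcond /=.
rewrite (eq_bigr (fun a => (if a == (l, false) then g a else 0) +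
                           (if a == (l, true) then g a else 0))); last first.
  move=> [m b] _ /=; rewrite !xpair_eqE.
  by case: (m == l); case: b; rewrite /= ?addr0 ?add0r.
by rewrite big_split /= !sum_pred1 ?fset_uniq.
Qed.

Definition xv (B : {fset elt}) (l : nat) : int :=
  ((l, false) \in B)%:Z - ((l, true) \in B)%:Z.

Lemma vecS_xv B l : vecS B l = (xv B l)%:~R.
Proof.
rewrite /vecS sum_fst /xv /=.
case: ((l,false) \in B); case: ((l,true) \in B) => /=.
all: by rewrite ?subrr ?subr0 ?sub0r ?addr0 ?add0r ?intrN.
Qed.

Definition Vc (E : {fset nat}) (c : nat -> int) (B : {fset elt}) : int :=
  \sum_(l <- E) c l * xv B l.

Lemma dotv_int E (w : nat -> int) B :
  dotv E (fun l => (w l)%:~R) B = (Vc E w B)%:~R.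
Proof.
rewrite /dotv /Vc rmorph_sum /=; apply: eq_bigr => l _.
by rewrite vecS_xv rmorphM.
Qed.

Lemma in_ground E l b : ((l, b) \in ground E) = (l \in E).
Proof.
rewrite /ground; apply/idP/idP.
  by case/fsetUP => /imfsetP [m /= Hm [-> _]].
move=> Hl; apply/fsetUP; case: b; [right|left]; apply/imfsetP; by exists l.
Qed.

Lemma admP E S : reflect (S `<=` ground E /\
   forall l, ~~ (((l,false) \in S) && ((l,true) \in S))) (admissible E S).
Proof.
rewrite /admissible; apply: (iffP andP) => [[HS /forallP H]|[HS H]]; split => //.
  move=> l; apply/negP => /andP [H1 H2].
  by have := H [` H1]; rewrite /= /bar /= H2.
apply/forallP => [[[l b] Hb]] /=; rewrite /bar /=.
apply/negP => Hb'; have := H l.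
by case: b Hb Hb' => /= -> ->.
Qed.

Lemma sum_le1 (s : seq nat) (t : nat -> nat) :
  (forall l, l \in s -> (t l <= 1)%N) -> (\sum_(l <- s) t l <= size s)%N.
Proof.
elim: s => [|a s IH] H; first by rewrite big_nil.
rewrite big_cons /=; have h1 := H a (mem_head _ _).
have h2 : (\sum_(l <- s) t l <= size s)%N.
  by apply: IH => l Hl; apply: H; rewrite in_cons Hl orbT.
lia.
Qed.

Lemma card_ground E S : S `<=` ground E ->
  #|` S| = (\sum_(l <- E) (((l,false) \in S) + ((l,true) \in S)))%N.
Proof.
move=> /fsubsetP HS; rewrite card_fset_sum1.
transitivity (\sum_(a <- S) \sum_(l <- E) (if l == a.1 then 1 else 0))%N.
  rewrite big_seq [RHS]big_seq; apply: eq_bigr => [[l b]] Hab.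
  by rewrite ((@sum_pred1 nat)) ?fset_uniq //= -(in_ground E l b) HS.
rewrite exchange_big /=.

apply: eq_bigr => l _ /=.
transitivity (\sum_(a <- S | a.1 == l) 1)%N.
  by rewrite [RHS]big_mkcond; apply: eq_bigr => a _; rewrite eq_sym.
rewrite ((@sum_fst nat)).
by case: ((l,false) \in S); case: ((l,true) \in S).
Qed.

Lemma feas_cover E B : admissible E B -> #|` B| = #|` E| ->
  forall l, l \in E -> ((l,false) \in B) || ((l,true) \in B).
Proof.
move=> /admP [HS Hnb] Hc l0 Hl0; apply/negPn/negP => Hn.
move: Hc; rewrite (@card_ground E B HS) (big_rem l0) //=.
have h1 : ((((l0, false) \in B) + ((l0, true) \in B)) = 0)%N.
  by move: Hn; case: ((l0,false) \in B); case: ((l0,true) \in B).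
have h2 := @sum_le1 (rem l0 E) (fun l => (((l, false) \in B) + ((l, true) \in B))%N).
have h3 : (\sum_(l <- rem l0 E) (((l, false) \in B) + ((l, true) \in B)) <= size (rem l0 E))%N.
  by apply: h2 => l _; move: (Hnb l); case: ((l,false) \in B); case: ((l,true) \in B).
rewrite size_rem // in h3.
have h4 : (0 < #|` E|)%N by rewrite cardfs_gt0; apply/fset0Pn; exists l0.
move=> h5; rewrite h1 add0n in h5.
have h6 : (#|` E| <= (#|` E|).-1)%N by rewrite -{1}h5; exact: h3.
lia.
Qed.

Lemma xv_range B l : -1 <= xv B l <= 1.
Proof. by rewrite /xv; case: ((l,false) \in B); case: ((l,true) \in B). Qed.

Lemma in_barS S l b : ((l, b) \in barS S) = ((l, ~~ b) \in S).
Proof.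
have -> : (l, b) = bar (l, ~~ b) by rewrite /bar /= negbK.
rewrite /barS mem_imfset //.
by move=> [x1 x2] [y1 y2] [-> h]; congr pair; move: h; case: x2; case: y2.
Qed.

Definition val (S B : {fset elt}) : int :=
  Posz #|` S `&` B| - Posz #|` barS S `&` B|.

Lemma val_V E0 S B : S `<=` ground E0 -> val S B = Vc E0 (xv S) B.
Proof.
move=> HS.
have HSB : S `&` B `<=` ground E0 by apply: fsubset_trans HS; apply: fsubsetIl.
have HbS : barS S `<=` ground E0.
  apply/fsubsetP => [[l b]]; rewrite in_barS in_ground => h.
  by rewrite -(in_ground E0 l (~~ b)); apply: (fsubsetP HS).
have HbSB : barS S `&` B `<=` ground E0 by apply: fsubset_trans HbS; apply: fsubsetIl.
rewrite /val (@card_ground E0 _ HSB) (@card_ground E0 _ HbSB).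
rewrite !(big_morph Posz PoszD (erefl _)) -sumrB /Vc.
apply: eq_bigr => l _; rewrite /xv !in_fsetI !in_barS /=.
by case: ((l,false) \in S); case: ((l,true) \in S); case: ((l,false) \in B); case: ((l,true) \in B).
Qed.

Lemma val_bounds E0 S B : S `<=` ground E0 ->
  - Posz #|` S| <= val S B <= Posz #|` S|.
Proof.
move=> HS; rewrite (@val_V E0 S B HS) (@card_ground E0 S HS) /Vc.
rewrite (big_morph Posz PoszD (erefl _)) -sumrN; apply/andP; split; apply: ler_sum => l _;
by rewrite /xv; case: ((l,false) \in S); case: ((l,true) \in S); case: ((l,false) \in B); case: ((l,true) \in B).
Qed.

Section BigMax.
Variables (T : eqType) (h : T -> int) (z : int).

Lemma bigmax_idx (s : seq T) : z <= \big[Num.max/z]_(B <- s) h B.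
Proof.
elim: s => [|a s IH]; first by rewrite big_nil.
by rewrite big_cons le_max IH orbT.
Qed.

Lemma bigmax_ub (s : seq T) B : B \in s -> h B <= \big[Num.max/z]_(B <- s) h B.
Proof.
elim: s => [|a s IH] //; rewrite in_cons big_cons le_max.
by case/orP => [/eqP ->|/IH ->]; rewrite ?lexx ?orbT.
Qed.

Lemma bigmax_le (s : seq T) m : z <= m -> (forall B, B \in s -> h B <= m) ->
  \big[Num.max/z]_(B <- s) h B <= m.
Proof.
move=> Hz; elim: s => [|a s IH] H; first by rewrite big_nil.
rewrite big_cons ge_max H ?mem_head //= IH // => B HB.
by apply: H; rewrite in_cons HB orbT.
Qed.

Lemma bigmax_att (s : seq T) : s != [::] -> (forall B, B \in s -> z <= h B) ->
  exists2 B, B \in s & \big[Num.max/z]_(B <- s) h B = h B.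
Proof.
elim: s => [|a s IH] // _ H.
have Ha : z <= h a by apply: H; rewrite mem_head.
case: (eqVneq s [::]) => [->|sn].
  by exists a; rewrite ?mem_head // big_cons big_nil max_l.
rewrite big_cons.
have [B HB ->] : exists2 B, B \in s & \big[Num.max/z]_(B <- s) h B = h B.
  by apply: IH => // B HB; apply: H; rewrite in_cons HB orbT.
case: (leP (h a) (h B)) => hab.
  by exists B; rewrite ?in_cons ?HB ?orbT // max_r.
by exists a; rewrite ?mem_head // max_l // ltW.
Qed.
End BigMax.

Lemma rankE F S : rankD F S = \big[Num.max/ - Posz #|` S|]_(B <- F) val S B.
Proof. by []. Qed.

Lemma rank_ub E0 F S B : S `<=` ground E0 -> B \in F -> Vc E0 (xv S) B <= rankD F S.
Proof. by move=> HS HB; rewrite rankE -(val_V _ _ _ HS); apply: bigmax_ub. Qed.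

Lemma rank_char E0 F S m : S `<=` ground E0 ->
  (exists2 B, B \in F & Vc E0 (xv S) B = m) ->
  (forall B, B \in F -> Vc E0 (xv S) B <= m) -> rankD F S = m.
Proof.
move=> HS [B0 HB0 <-] H; apply/eqP; rewrite eq_le (rank_ub _ _ _ _ HS HB0) andbT rankE.
apply: bigmax_le.
  by rewrite -(val_V _ _ _ HS); case/andP: (val_bounds _ _ B0 HS).
by move=> B HB; rewrite (val_V _ _ _ HS); apply: H.
Qed.

Lemma rank_att E0 F S : S `<=` ground E0 -> F != fset0 ->
  exists2 B, B \in F & rankD F S = Vc E0 (xv S) B.
Proof.
move=> HS /fset0Pn [B0 HB0]; rewrite rankE.
have [B HB ->] := @bigmax_att _ (val S) (- Posz #|` S|) (enum_fset F)
  (ltac:(by move: (HB0 : B0 \in enum_fset F); case: (enum_fset F)))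
  (fun B _ => proj1 (andP (val_bounds _ _ B HS))).
by exists B => //; rewrite (val_V _ _ _ HS).
Qed.

Lemma rank_le_card F S E0 : S `<=` ground E0 -> rankD F S <= Posz #|` S|.
Proof.
move=> HS; rewrite rankE; apply: bigmax_le.
  lia.
by move=> B _; case/andP: (val_bounds _ _ B HS).
Qed.

Definition sg (b : bool) : int := if b then -1 else 1.

Lemma zsum_le (s : seq nat) (g : nat -> int) :
  (forall l, l \in s -> g l <= 1) -> \sum_(l <- s) g l <= Posz (size s).
Proof.
elim: s => [|a s IH] H; first by rewrite big_nil.
rewrite big_cons /=; have h1 := H a (mem_head _ _).
have h2 : \sum_(l <- s) g l <= Posz (size s).
  by apply: IH => l Hl; apply: H; rewrite in_cons Hl orbT.
by rewrite intS; apply: lerD.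
Qed.

Lemma zsum_ge (s : seq nat) (g : nat -> int) :
  (forall l, l \in s -> -1 <= g l) -> - Posz (size s) <= \sum_(l <- s) g l.
Proof.
elim: s => [|a s IH] H; first by rewrite big_nil.
rewrite big_cons /=; have h1 := H a (mem_head _ _).
have h2 : - Posz (size s) <= \sum_(l <- s) g l.
  by apply: IH => l Hl; apply: H; rewrite in_cons Hl orbT.
by rewrite intS opprD; apply: lerD.
Qed.

Lemma zsum_eq (s : seq nat) (g : nat -> int) :
  (forall l, l \in s -> g l = 1) -> \sum_(l <- s) g l = Posz (size s).
Proof.
elim: s => [|a s IH] H; first by rewrite big_nil.
rewrite big_cons /= H ?mem_head // IH; first by rewrite intS.
by move=> l Hl; apply: H; rewrite in_cons Hl orbT.
Qed.

Lemma zsum_lt (s : seq nat) (g : nat -> int) l0 :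
  (forall l, l \in s -> g l <= 1) -> l0 \in s -> g l0 <= -1 ->
  \sum_(l <- s) g l <= Posz (size s) - 2.
Proof.
move=> H Hl0 Hg; rewrite (big_rem l0) //=.
have h2 := @zsum_le (rem l0 s) g (fun l Hl => H l (mem_rem Hl)).
rewrite size_rem // in h2.
have h3 : (0 < size s)%N by case: s Hl0 {H h2}.
have -> : Posz (size s) = 1 + Posz (size s).-1 by rewrite -intS prednK.
have -> : 1 + Posz (size s).-1 - 2 = -1 + Posz (size s).-1 by rewrite addrC addrA; congr (_ + _).
by apply: lerD.
Qed.

Lemma Vc_add E c1 c2 B : Vc E (fun l => c1 l + c2 l) B = Vc E c1 B + Vc E c2 B.
Proof. by rewrite /Vc -big_split; apply: eq_bigr => l _; rewrite mulrDl. Qed.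

Lemma Vc_scale E k c B : Vc E (fun l => k * c l) B = k * Vc E c B.
Proof. by rewrite /Vc mulr_sumr; apply: eq_bigr => l _; rewrite mulrA. Qed.

Lemma Vc_delta E i mu B : i \in E ->
  Vc E (fun l => if l == i then mu else 0) B = mu * xv B i.
Proof.
move=> Hi; rewrite /Vc.
rewrite (eq_bigr (fun l => if l == i then mu * xv B l else 0)); last first.
  by move=> l _; case: (l == i); rewrite ?mul0r.
by rewrite sum_pred1 ?fset_uniq // Hi.
Qed.

Lemma dm_feas E F B : is_delta_matroid E F -> B \in F ->
  admissible E B /\ #|` B| = #|` E|.
Proof. by case=> _ H _ HB; apply: H. Qed.
Arguments dm_feas {E F B}.

Lemma feas_x E B l : admissible E B -> #|` B| = #|` E| -> l \in E ->
  forall b, ((l, b) \in B) = (xv B l == sg b).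
Proof.
move=> Ha Hc Hl b; have := @feas_cover E B Ha Hc l Hl; case/admP: Ha => _ /(_ l).
rewrite /xv /sg.
by case: b; case: ((l,false) \in B); case: ((l,true) \in B).
Qed.

Lemma feas_pm E B l : admissible E B -> #|` B| = #|` E| -> l \in E ->
  xv B l = 1 \/ xv B l = -1.
Proof.
move=> Ha Hc Hl; have := @feas_cover E B Ha Hc l Hl; case/admP: Ha => _ /(_ l).
rewrite /xv.
by case: ((l,false) \in B); case: ((l,true) \in B) => //= _ _; [left|right].
Qed.

Lemma feas_eq E B1 B2 : admissible E B1 -> #|` B1| = #|` E| ->
  admissible E B2 -> #|` B2| = #|` E| ->
  (forall l, l \in E -> xv B1 l = xv B2 l) -> B1 = B2.
Proof.
move=> Ha1 Hc1 Ha2 Hc2 H; apply/fsetP => [[l b]].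
case: (boolP (l \in E)) => Hl.
  by rewrite (@feas_x E B1 l Ha1 Hc1 Hl) (@feas_x E B2 l Ha2 Hc2 Hl) H.
case/admP: Ha1 => /fsubsetP H1 _; case/admP: Ha2 => /fsubsetP H2 _.
apply/idP/idP => h.
  by move: (H1 _ h); rewrite in_ground (negbTE Hl).
by move: (H2 _ h); rewrite in_ground (negbTE Hl).
Qed.

Lemma argmax_seq (T : eqType) (s : seq T) (P : pred T) (g : T -> int) x0 :
  x0 \in s -> P x0 ->
  exists B, [/\ B \in s, P B & forall y, y \in s -> P y -> g y <= g B].
Proof.
elim: s x0 => [|a s IH] x0 //.
case: (boolP (has P s)) => [/hasP [x1 Hx1 Px1] _ _|Hn].
  have [B' [HB' PB' Hm]] := IH x1 Hx1 Px1.
  case: (boolP (P a && (g B' <= g a))) => [/andP [Pa Hle]|Hn].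
    exists a; split; rewrite ?mem_head //.
    move=> y; rewrite in_cons => /orP [/eqP ->|Hy Py]; first by rewrite lexx.
    by apply: le_trans (Hm y Hy Py) Hle.
  exists B'; split; rewrite ?in_cons ?HB' ?orbT //.
  move=> y; rewrite in_cons => /orP [/eqP -> Pa|Hy Py]; last by apply: Hm.
  by move: Hn; rewrite Pa /= -ltNge => /ltW.
rewrite in_cons => /orP [/eqP ->|Hx0 Px0]; last first.
  by move/hasPn: Hn => /(_ x0 Hx0); rewrite Px0.
move=> Pa; exists a; split; rewrite ?mem_head //.
move=> y; rewrite in_cons => /orP [/eqP ->|Hy Py]; first by rewrite lexx.
by move/hasPn: Hn => /(_ y Hy); rewrite Py.
Qed.

Lemma Vc_lin E k1 k2 c1 c2 i mu B : i \in E ->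
  Vc E (fun l => k1 * c1 l + k2 * c2 l + (if l == i then mu else 0)) B =
  k1 * Vc E c1 B + k2 * Vc E c2 B + mu * xv B i.
Proof.
move=> Hi.
rewrite (Vc_add E (fun l => k1 * c1 l + k2 * c2 l) (fun l => if l == i then mu else 0)).
rewrite (Vc_add E (fun l => k1 * c1 l) (fun l => k2 * c2 l)).
by rewrite !Vc_scale Vc_delta.
Qed.

Lemma xv_prod_range C B l : -1 <= xv C l * xv B l <= 1.
Proof.
by rewrite /xv; case: ((l,false) \in C); case: ((l,true) \in C); case: ((l,false) \in B); case: ((l,true) \in B).
Qed.

Lemma sg_neg b : sg (~~ b) = - sg b.
Proof. by case: b. Qed.

Lemma sg_sq b : sg b * sg b = 1.
Proof. by case: b. Qed.

Lemma arithA1 (n x y bx : int) : x <= y -> bx <= n -> x + bx <= y + n.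
Proof. lia. Qed.
Lemma arithA2 (n x y bx : int) : x <= y -> bx <= n - 2 -> x + bx < y + n.
Proof. lia. Qed.
Lemma arithA3 (n x bx b0 : int) : x <= (n + 1) * (n - 2) -> bx <= n -> - n <= b0 ->
  x + bx < (n + 1) * n + b0.
Proof. lia. Qed.

Lemma arithB1 (x y z : int) : x <= y -> 2 * x + (z - y) <= z + y.
Proof. lia. Qed.
Lemma arithB2 (x y z : int) : x <= z -> 2 * x + - (z - y) <= z + y.
Proof. lia. Qed.
Lemma arithB3 (x y z : int) : x < y -> 2 * x + (z - y) < z + y.
Proof. lia. Qed.
Lemma arithB4 (x y z : int) : x < z -> 2 * x + - (z - y) < z + y.
Proof. lia. Qed.

Lemma arithC (x x' : int) : -2 <= x' - x -> x - 2 <= x'.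
Proof. lia. Qed.

Lemma arithD (z y x : int) : -1 <= z <= 1 -> -1 <= y <= 1 -> -1 <= x <= 1 -> -2 <= x * (y - z).
Proof. nia. Qed.

Lemma key E F i (s : bool) B0 B1 (c : nat -> int) :
  is_delta_matroid E F -> i \in E -> B0 \in F -> (i, ~~ s) \in B0 ->
  B1 \in F -> (i, s) \in B1 ->
  c i = 0 -> (forall l, -1 <= c l <= 1) ->
  exists B, [/\ B \in F, (i, s) \in B & Vc E c B0 - 2 <= Vc E c B].
Proof.
move=> HD Hi HB0 Hi0 HB1 Hi1 ci cb.
have [Ha0 Hc0] := dm_feas HD HB0.
pose a := fun B => Vc E (xv B0) B.
have [Bp [HBp Hip Hmax]] := @argmax_seq _ (enum_fset F) (fun B => (i, s) \in B) a B1 HB1 Hi1.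
have [Hap Hcp] := dm_feas HD HBp.
set n := Posz #|` E|.
pose b := fun B => Vc E (xv Bp) B.
have fself : forall B, admissible E B -> #|` B| = #|` E| -> Vc E (xv B) B = n.
  move=> B Ha Hc; rewrite /Vc zsum_eq // => l Hl.
  by case: (@feas_pm E B l Ha Hc Hl) => ->.
have frange : forall C B, - n <= Vc E (xv C) B <= n.
  move=> C B; apply/andP; split; [apply: zsum_ge|apply: zsum_le] => l _;
  by case/andP: (xv_prod_range C B l).
have flt : forall C B, admissible E C -> #|` C| = #|` E| ->
    admissible E B -> #|` B| = #|` E| -> B != C -> Vc E (xv C) B <= n - 2.
  move=> C B HaC HcC HaB HcB HBC.
  case: (boolP (all (fun l => xv C l == xv B l) E)) => [/allP Hall|/allPn [l Hl Hne]].
    by move: HBC; rewrite (@feas_eq E B C HaB HcB HaC HcC) ?eqxx // => l Hl; apply/esym/eqP/Hall.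
  apply: (@zsum_lt _ _ l) => //.
    by move=> l' _; case/andP: (xv_prod_range C B l').
  case: (@feas_pm E C l HaC HcC Hl) => hC; case: (@feas_pm E B l HaB HcB Hl) => hB;
  by move: Hne; rewrite hC hB.
have xi : forall B, B \in F -> xv B i = if (i, s) \in B then sg s else - sg s.
  move=> B HB; have [HaB HcB] := dm_feas HD HB.
  rewrite (@feas_x E B i HaB HcB Hi s).
  case: (eqVneq (xv B i) (sg s)) => // hne.
  have : sg s = 1 \/ sg s = -1 by rewrite /sg; case: (s); [right|left].
  by case: (@feas_pm E B i HaB HcB Hi) hne => -> hne [] e; rewrite e in hne *.
have x0i : xv B0 i = - sg s.
  by have := (@feas_x E B0 i Ha0 Hc0 Hi (~~ s)); rewrite Hi0 sg_neg => /esym/eqP.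
have xpi : xv Bp i = sg s by rewrite xi // Hip.
pose K := n + 1.
pose psi := fun B => K * a B + b B.
pose mu := sg s * (psi B0 - psi Bp).
pose w := fun l => (2 * K) * xv B0 l + 2 * xv Bp l + (if l == i then mu else 0).
have phiE : forall B, Vc E w B = 2 * psi B + mu * xv B i.
  move=> B; rewrite /w Vc_lin // /psi; ring.
have Hbp : b Bp = n := fself Bp Hap Hcp.
have Ha0n : a B0 = n := fself B0 Ha0 Hc0.
have e1 : forall x, sg s * x * - sg s = - x by move=> x; rewrite /sg; case: (s); ring.
have e2 : forall x, sg s * x * sg s = x by move=> x; rewrite /sg; case: (s); ring.
have phi0 : Vc E w B0 = psi B0 + psi Bp by rewrite phiE x0i /mu e1; ring.
have phip : Vc E w Bp = psi B0 + psi Bp by rewrite phiE xpi /mu e2; ring.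
have n0 : 0 <= n by [].
have cls1 : forall B, B \in F -> (i, s) \in B ->
    psi B <= psi Bp /\ (B != Bp -> psi B < psi Bp).
  move=> B HB HiB; have [HaB HcB] := dm_feas HD HB.
  have h1 : a B <= a Bp := Hmax B HB HiB.
  have h2 : b B <= n by case/andP: (frange Bp B).
  have hp : (n + 1) * a B <= (n + 1) * a Bp by apply: ler_wpM2l => //; rewrite addr_ge0.
  rewrite /psi /K Hbp; split; first exact: arithA1.
  move=> hne; have h3 : b B <= n - 2 := flt Bp B Hap Hcp HaB HcB hne.
  exact: arithA2.
have cls2 : forall B, B \in F -> (i, s) \notin B -> B != B0 -> psi B < psi B0.
  move=> B HB HiB hne; have [HaB HcB] := dm_feas HD HB.
  have h1 : a B <= n - 2 := flt B0 B Ha0 Hc0 HaB HcB hne.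
  have h2 : b B <= n by case/andP: (frange Bp B).
  have h3 : - n <= b B0 by case/andP: (frange Bp B0).
  have hp : (n + 1) * a B <= (n + 1) * (n - 2) by apply: ler_wpM2l => //; rewrite addr_ge0.
  rewrite /psi /K Ha0n; exact: arithA3.
have I1 : forall B, B \in F -> Vc E w B <= Vc E w B0.
  move=> B HB; rewrite phiE phi0 xi //; case: ifP => HiB.
    by rewrite /mu e2; apply: arithB1; case: (cls1 B HB HiB).
  rewrite /mu e1; apply: arithB2.
  case: (eqVneq B B0) => [->|hne]; first exact: lexx.
  by apply: ltW; apply: cls2 => //; rewrite HiB.
have I2 : forall B, B \in F -> Vc E w B = Vc E w B0 -> B = B0 \/ B = Bp.
  move=> B HB; rewrite phiE phi0 xi //; case: ifP => HiB.
    rewrite /mu e2 => h; right; apply/eqP; apply/negPn/negP => hne.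
    have := @arithB3 _ _ (psi B0) (proj2 (cls1 B HB HiB) hne).
    by rewrite h ltxx.
  rewrite /mu e1 => h; left; apply/eqP; apply/negPn/negP => hne.
  have := @arithB4 _ (psi Bp) _ (cls2 B HB (negbT HiB) hne).
  by rewrite h ltxx.
have Hne : B0 != Bp.
  apply/eqP => e; move: Hi0 Hip; rewrite e; case/admP: Hap => _ /(_ i).
  by case: (s) => /= /negP h h1 h2; apply: h; rewrite h1 h2.
have Hpar : parallel_ok E (fun l => vecS Bp l - vecS B0 l).
  case: HD => _ _ Hedge.
  apply: (Hedge (fun l => (w l)%:~R) B0 Bp) => //.
  - by move=> B HB; rewrite !dotv_int ler_int; apply: I1.
  - by rewrite !dotv_int phip phi0.
  move=> B HB; rewrite !dotv_int => /eqP; rewrite eqr_int => /eqP /(I2 B HB) [->|->].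
    by exists 0 => l; rewrite subrr mul0r.
  by exists 1 => l; rewrite mul1r.
case: Hpar => k [i' [j' [Hi' Hj' Hcase]]].
have Hz : forall l, l != i' -> l != j' -> xv Bp l = xv B0 l.
  move=> l h1 h2.
  have : vecS Bp l - vecS B0 l = 0.
    by case: Hcase => [H|[[_ H]|[_ H]]]; rewrite H /unitv (negbTE h1) ?(negbTE h2) ?addr0 ?subr0 mulr0.
  by rewrite !vecS_xv -rmorphB /= => /eqP; rewrite intr_eq0 subr_eq0 => /eqP.
have Hii : (i == i') || (i == j').
  apply/negPn/negP; rewrite negb_or => /andP [h1 h2].
  have := Hz i h1 h2; rewrite xpi x0i => /eqP.
  by rewrite /sg; case: (s).
pose q := if i == i' then j' else i'.
have Hq : forall l, l != i -> l != q -> xv Bp l = xv B0 l.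
  move=> l h1 h2; rewrite /q in h2.
  case: (eqVneq i i') Hii h2 => [e _|ne /= /eqP e] /= h2; apply: Hz => //; by rewrite -e.
exists Bp; split => //.
have hd : Vc E c Bp - Vc E c B0 = \sum_(l <- E) (if l == q then c q * (xv Bp q - xv B0 q) else 0).
  rewrite /Vc -sumrB; apply: eq_bigr => l _.
  case: (eqVneq l q) => [lq|lq] /=.
    by rewrite lq; ring.
  case: (eqVneq l i) => [li|li].
    by rewrite li ci; ring.
  by rewrite (Hq l li lq) subrr.
rewrite sum_pred1 ?fset_uniq // in hd.
have hb : -2 <= (if q \in E then c q * (xv Bp q - xv B0 q) else 0).
  case: (q \in E) => //.
  have := cb q; have := xv_range Bp q; have := xv_range B0 q.
  exact: arithD.
by move: hb; rewrite -hd; apply: arithC.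
Qed.

Lemma ground_noi E i S b : S `<=` ground (E `\ i) -> (i, b) \notin S.
Proof.
move=> /fsubsetP HS; apply/negP => /HS; rewrite in_ground !inE.
by rewrite eqxx.
Qed.

Lemma ground_sub E i S : S `<=` ground (E `\ i) -> S `<=` ground E.
Proof.
move=> /fsubsetP HS; apply/fsubsetP => [[l b]] /HS; rewrite !in_ground !inE.
by case/andP.
Qed.

Lemma Vc_split E i c B : i \in E -> Vc E c B = c i * xv B i + Vc (E `\ i) c B.
Proof. by move=> Hi; rewrite /Vc (big_fsetD1 _ Hi). Qed.

Lemma Vc_eq_on E c c' B B' :
  (forall l, l \in E -> c l * xv B l = c' l * xv B' l) -> Vc E c B = Vc E c' B'.
Proof.
move=> H; rewrite /Vc big_seq [RHS]big_seq; apply: eq_bigr => l Hl; exact: H.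
Qed.

Lemma xv_ext i b S' l : l != i -> xv ((i, b) |` S') l = xv S' l.
Proof. by move=> hl; rewrite /xv !inE !xpair_eqE (negbTE hl). Qed.

Lemma xv_ext_i E i b S' : S' `<=` ground (E `\ i) -> xv ((i, b) |` S') i = sg b.
Proof.
move=> HS; rewrite /xv !inE !xpair_eqE eqxx /= (negbTE (@ground_noi E i S' false HS)).
by rewrite (negbTE (@ground_noi E i S' true HS)); case: b.
Qed.

Lemma xv_noi E i S' : S' `<=` ground (E `\ i) -> xv S' i = 0.
Proof.
move=> HS; rewrite /xv (negbTE (@ground_noi E i S' false HS)).
by rewrite (negbTE (@ground_noi E i S' true HS)).
Qed.

Lemma xv_del B X l : (forall a, a \in X -> a.1 != l) -> xv (B `\` X) l = xv B l.
Proof.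
move=> H; rewrite /xv !in_fsetD.
have -> : ((l, false) \in X) = false by apply/negP => /H /=; rewrite eqxx.
by have -> : ((l, true) \in X) = false by apply/negP => /H /=; rewrite eqxx.
Qed.

Lemma rank_shift F G S S' E0 E1 (d : int) : S `<=` ground E0 -> S' `<=` ground E1 ->
  G != fset0 ->
  (forall B, B \in F -> exists B', B' \in G /\ Vc E0 (xv S) B <= d + Vc E1 (xv S') B') ->
  (forall B', B' \in G -> exists B, B \in F /\ Vc E0 (xv S) B = d + Vc E1 (xv S') B') ->
  rankD F S = d + rankD G S'.
Proof.
move=> HS HS' HG H1 H2.
have [B'0 HB'0 eB] := @rank_att E1 G S' HS' HG.
apply: (@rank_char E0 F S _ HS).
  by have [B [HB e]] := H2 B'0 HB'0; exists B => //; rewrite e eB.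
move=> B HB; have [B' [HB' h]] := H1 B HB.
apply: (le_trans h); rewrite lerD2l; exact: (@rank_ub E1 G S' B' HS' HB').
Qed.

Definition minor_s (F : {fset {fset elt}}) (i : nat) (b : bool) : {fset {fset elt}} :=
  [fset B `\` [fset (i, b)] | B in [fset B in F | (i, b) \in B]].

Lemma arithE (x y : int) : x - 2 <= y -> - 1 + x <= 1 + y.
Proof. lia. Qed.

Section Minors.
Variables (E : {fset nat}) (F : {fset {fset elt}}) (i : nat).
Hypothesis HD : is_delta_matroid E F.
Hypothesis Hi : i \in E.

Lemma V_ext b S' B : S' `<=` ground (E `\ i) ->
  Vc E (xv ((i, b) |` S')) B = sg b * xv B i + Vc (E `\ i) (xv S') B.
Proof.
move=> HS; rewrite (@Vc_split E i _ B Hi) (@xv_ext_i E i b S' HS); congr (_ + _).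
apply: Vc_eq_on => l; rewrite in_fsetD1 => /andP [hl _].
by rewrite xv_ext.
Qed.

Lemma V_noi S' B : S' `<=` ground (E `\ i) -> Vc E (xv S') B = Vc (E `\ i) (xv S') B.
Proof. by move=> HS; rewrite (@Vc_split E i _ B Hi) (@xv_noi E i S' HS) mul0r add0r. Qed.

Lemma V_del S' B X : (forall a, a \in X -> a.1 = i) ->
  Vc (E `\ i) (xv S') (B `\` X) = Vc (E `\ i) (xv S') B.
Proof.
move=> HX; apply: Vc_eq_on => l; rewrite in_fsetD1 => /andP [hl _].
by rewrite xv_del // => a /HX ->; rewrite eq_sym.
Qed.

Lemma xv_feas B b : B \in F -> (i, b) \in B -> xv B i = sg b.
Proof.
move=> HB; have [HaB HcB] := dm_feas HD HB.
by rewrite (@feas_x E B i HaB HcB Hi b) => /eqP.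
Qed.

Lemma ext_sub b S' : S' `<=` ground (E `\ i) -> (i, b) |` S' `<=` ground E.
Proof.
move=> HS; rewrite fsubUset (@ground_sub E i S' HS) andbT fsub1set in_ground //.
Qed.

Lemma rank_nonloop b S' : S' `<=` ground (E `\ i) ->
  (exists2 B1, B1 \in F & (i, b) \in B1) ->
  rankD F ((i, b) |` S') = 1 + rankD (minor_s F i b) S'.
Proof.
move=> HS [B1 HB1 Hb1].
apply: (@rank_shift F _ _ _ E (E `\ i) 1 (@ext_sub b S' HS) HS).
- apply/fset0Pn; exists (B1 `\` [fset (i, b)]); apply/imfsetP; exists B1 => //.
  by rewrite !inE /= HB1 Hb1.
- move=> B HB; have [HaB HcB] := dm_feas HD HB; rewrite V_ext //.
  case: (boolP ((i, b) \in B)) => hb.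
    exists (B `\` [fset (i, b)]); split.
      by apply/imfsetP; exists B => //; rewrite !inE /= HB hb.
    rewrite V_del; last by move=> a; rewrite inE => /eqP ->.
    by rewrite (@xv_feas _ _ HB hb) sg_sq.
  have hnb : (i, ~~ b) \in B.
    by move: (@feas_cover E B HaB HcB i Hi) hb; case: (b) => /=; case: ((i,false) \in B); case: ((i,true) \in B).
  have [Bp [HBp Hbp hle]] := @key E F i b B B1 (xv S') HD Hi HB hnb HB1 Hb1 (@xv_noi E i S' HS) (xv_range S').
  exists (Bp `\` [fset (i, b)]); split.
    by apply/imfsetP; exists Bp => //; rewrite !inE /= HBp Hbp.
  rewrite V_del; last by move=> a; rewrite inE => /eqP ->.
  rewrite (@xv_feas _ _ HB hnb) sg_neg mulrN sg_sq.
  by move: hle; rewrite !(@V_noi S') //; apply: arithE.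
- move=> B' /imfsetP [B]; rewrite !inE /= => /andP [HB hb] ->.
  exists B; split => //; rewrite V_ext // V_del; last by move=> a; rewrite inE => /eqP ->.
  by rewrite (@xv_feas _ _ HB hb) sg_sq.
Qed.

Lemma mid_i a : a \in [fset (i, false); (i, true)] -> a.1 = i.
Proof. by rewrite !inE => /orP [/eqP ->|/eqP ->]. Qed.

Lemma mid_ne0 : minor_mid F i != fset0.
Proof.
case: HD => /fset0Pn [B0 HB0] _ _.
by apply/fset0Pn; exists (B0 `\` [fset (i, false); (i, true)]); apply/imfsetP; exists B0.
Qed.

Lemma rank_mid S' : S' `<=` ground (E `\ i) ->
  rankD F S' = 0 + rankD (minor_mid F i) S'.
Proof.
move=> HS; apply: (@rank_shift F _ _ _ (E `\ i) (E `\ i) 0 HS HS mid_ne0).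
- move=> B HB; exists (B `\` [fset (i, false); (i, true)]); split.
    by apply/imfsetP; exists B.
  by rewrite V_del ?add0r // => a /mid_i.
- move=> B' /imfsetP [B HB ->]; exists B; split => //.
  by rewrite V_del ?add0r // => a /mid_i.
Qed.

Lemma rank_loop b t S' : S' `<=` ground (E `\ i) ->
  (forall B, B \in F -> (i, t) \in B) ->
  rankD F ((i, b) |` S') = sg b * sg t + rankD (minor_mid F i) S'.
Proof.
move=> HS Ht; apply: (@rank_shift F _ _ _ E (E `\ i) _ (@ext_sub b S' HS) HS mid_ne0).
- move=> B HB; exists (B `\` [fset (i, false); (i, true)]); split.
    by apply/imfsetP; exists B.
  by rewrite V_ext // V_del ?(@xv_feas _ _ HB (Ht B HB)) // => a /mid_i.
- move=> B' /imfsetP [B HB ->]; exists B; split => //.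
  by rewrite V_ext // V_del ?(@xv_feas _ _ HB (Ht B HB)) // => a /mid_i.
Qed.
End Minors.

Lemma inAdS E S : (S \in AdS E) = admissible E S.
Proof.
rewrite /AdS !inE /= fpowersetE /admissible.
by case: (S `<=` ground E).
Qed.

Lemma sum_perm_map (V : nmodType) (T T' : eqType) (s : seq T) (P : pred T) (s' : seq T')
  (h : T' -> T) (t : T -> V) :
  uniq s -> uniq s' -> {in s' &, injective h} ->
  (forall S, (S \in s) && P S = (S \in map h s')) ->
  \sum_(S <- s | P S) t S = \sum_(S' <- s') t (h S').
Proof.
move=> us us' hinj H; rewrite -big_filter -(big_map h xpredT).
apply: perm_big; apply: uniq_perm.
- exact: filter_uniq.
- by rewrite map_inj_in_uniq.
- by move=> S; rewrite mem_filter andbC H.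
Qed.

Lemma adm_extP E i b S : i \in E ->
  reflect (exists2 S', admissible (E `\ i) S' & S = (i, b) |` S')
          (admissible E S && ((i, b) \in S)).
Proof.
move=> Hi; apply: (iffP andP).
  case=> /admP [/fsubsetP HS Hnb] Hb; exists (S `\ (i, b)); last by rewrite fsetD1K.
  apply/admP; split.
    apply/fsubsetP => [[l c]]; rewrite in_fsetD1 in_ground in_fsetD1 => /andP [hne hin].
    rewrite -(in_ground E l c) HS // andbT; apply/eqP => eli; subst l.
    move: (Hnb i) hne hin Hb; rewrite xpair_eqE eqxx /=.
    by case: (c); case: (b) => /=; move=> /negP h ? ? ?; apply: h; apply/andP.
  move=> l; rewrite !in_fsetD1; apply/negP => /andP [/andP [_ h1] /andP [_ h2]].
  by move/negP: (Hnb l); apply; rewrite h1 h2.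
case=> S' /admP [HS' Hnb'] ->; split; last by rewrite fsetU11.
apply/admP; split.
  rewrite fsubUset fsub1set in_ground Hi /=.
  apply/fsubsetP => [[l c]] /(fsubsetP HS'); rewrite !in_ground in_fsetD1.
  by case/andP.
move=> l; rewrite !inE !xpair_eqE.
case: (eqVneq l i) => [->|hl] /=; last exact: Hnb'.
rewrite (negbTE (@ground_noi E i S' false HS')) (negbTE (@ground_noi E i S' true HS')).
by case: (b).
Qed.

Lemma adm_noneP E i S : i \in E ->
  (admissible E S && ((i, false) \notin S) && ((i, true) \notin S)) = admissible (E `\ i) S.
Proof.
move=> Hi; apply/idP/idP.
  case/andP => /andP [/admP [/fsubsetP HS Hnb] h1] h2; apply/admP; split => //.
  apply/fsubsetP => [[l c]] hin; rewrite in_ground in_fsetD1 -(in_ground E l c) HS // andbT.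
  apply/eqP => eli; subst l; move: hin; case: (c) => hin.
    by rewrite hin in h2.
  by rewrite hin in h1.
move=> Ha; have [HS _] := admP _ _ Ha.
rewrite (negbTE (@ground_noi E i S false HS)) (negbTE (@ground_noi E i S true HS)) !andbT.
case/admP: Ha => _ Hnb; apply/admP; split => //; exact: ground_sub HS.
Qed.

Lemma AdS_split (V : nmodType) E i (t : {fset elt} -> V) : i \in E ->
  \sum_(S <- AdS E) t S =
  \sum_(S' <- AdS (E `\ i)) (t ((i, false) |` S') + t ((i, true) |` S') + t S').
Proof.
move=> Hi.
have hinj : forall b, {in AdS (E `\ i) &, injective (fun S' => (i, b) |` S')}.
  move=> b S1 S2; rewrite !inAdS => /admP [H1 _] /admP [H2 _] e.
  by rewrite -(fsetU1K (@ground_noi E i S1 b H1)) e fsetU1K // (@ground_noi E i S2 b H2).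
have hmem : forall b S, (S \in map (fun S' => (i, b) |` S') (AdS (E `\ i))) =
                       admissible E S && ((i, b) \in S).
  move=> b S; apply/mapP/(@adm_extP E i b S Hi) => [[S' HS' ->]|[S' HS' ->]]; exists S' => //.
    by rewrite -inAdS.
  by rewrite inAdS.
rewrite (bigID (fun S => (i, false) \in S)) /=.
rewrite [X in _ + X](bigID (fun S => (i, true) \in S)) /=.
rewrite !big_split /= addrA; congr (_ + _ + _).
- rewrite (@sum_perm_map V _ _ (AdS E) _ (AdS (E `\ i)) (fun S' => (i, false) |` S') t) ?fset_uniq //; try exact: (hinj _).
  by move=> S; rewrite hmem inAdS.
- rewrite (@sum_perm_map V _ _ (AdS E) _ (AdS (E `\ i)) (fun S' => (i, true) |` S') t) ?fset_uniq //; try exact: (hinj _).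
  move=> S; rewrite hmem inAdS; case: (boolP (admissible E S)) => //= Ha.
  case: (boolP ((i, true) \in S)) => ht; rewrite ?andbF // andbT.
  by case/admP: Ha => _ /(_ i); rewrite ht andbT.
- rewrite (@sum_perm_map V _ _ (AdS E) _ (AdS (E `\ i)) id t) ?fset_uniq //; try by move=> ? ? ? ? ->.
  by move=> S; rewrite map_id inAdS inAdS -(@adm_noneP E i S Hi) andbA.
Qed.

Lemma T1 (nE nE' nS nS' : nat) (r r' : int) : nE = nE'.+1 -> nS = nS'.+1 -> r = 1 + r' ->
  uvar ^+ (nE - nS) * vvar ^+ (absz (Posz nS - r) %/ 2) =
  uvar ^+ (nE' - nS') * vvar ^+ (absz (Posz nS' - r') %/ 2).
Proof.
move=> -> -> ->; rewrite subSS; congr (_ * vvar ^+ (absz _ %/ 2)).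
by rewrite intS; ring.
Qed.

Lemma T2 (nE nE' nS nS' : nat) (r r' : int) : nE = nE'.+1 -> nS = nS'.+1 -> r = -1 + r' ->
  r' <= Posz nS' ->
  uvar ^+ (nE - nS) * vvar ^+ (absz (Posz nS - r) %/ 2) =
  vvar * (uvar ^+ (nE' - nS') * vvar ^+ (absz (Posz nS' - r') %/ 2)).
Proof.
move=> -> -> -> hr; rewrite subSS mulrCA -exprS.
have [m hm] : exists m : nat, Posz nS' - r' = Posz m.
  by exists (absz (Posz nS' - r')); rewrite gez0_abs // subr_ge0.
have -> : Posz nS'.+1 - (-1 + r') = Posz (m + 2).
  by rewrite PoszD -hm intS; ring.
rewrite hm /=; congr (_ * vvar ^+ _); lia.
Qed.

Lemma T3 (nE nE' nS nS' : nat) (r r' : int) : nE = nE'.+1 -> nS = nS' -> (nS' <= nE')%N ->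
  r = 0 + r' ->
  uvar ^+ (nE - nS) * vvar ^+ (absz (Posz nS - r) %/ 2) =
  uvar * (uvar ^+ (nE' - nS') * vvar ^+ (absz (Posz nS' - r') %/ 2)).
Proof.
by move=> -> -> h ->; rewrite subSn // exprS add0r mulrA.
Qed.

Lemma card_adm E S : admissible E S -> (#|` S| <= #|` E|)%N.
Proof.
case/admP => HS Hnb; rewrite (@card_ground E S HS); apply: sum_le1 => l _.
by move: (Hnb l); case: ((l,false) \in S); case: ((l,true) \in S).
Qed.

Lemma Upoly0 F : is_delta_matroid fset0 F -> Upoly fset0 F = 1.
Proof.
move=> HD.
have hA : AdS fset0 = [fset fset0].
  apply/fsetP => S; rewrite inAdS inE.
  apply/idP/idP.
    case/admP => HS _; apply/eqP/fsetP => [[l b]]; rewrite inE.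
    apply/negP => /(fsubsetP HS); by rewrite in_ground inE.
  move/eqP ->; apply/admP; split; first exact: fsub0set.
  by move=> l; rewrite inE.
rewrite /Upoly hA big_seq_fset1 cardfs0 sub0n expr0 mul1r.
have h0 : fset0 `<=` ground fset0 by exact: fsub0set.
have h1 := @rank_le_card F fset0 fset0 h0.
have h2 : - Posz #|` (fset0 : {fset elt})| <= rankD F fset0 by rewrite rankE; apply: bigmax_idx.
rewrite cardfs0 in h1 h2.
have -> : rankD F fset0 = 0 by apply/eqP; rewrite eq_le h1 -oppr0.
by rewrite subr0.
Qed.

Lemma card_ext E i b S' : S' `<=` ground (E `\ i) -> #|` (i, b) |` S'| = (#|` S'|).+1.
Proof. by move=> HS; rewrite cardfsU1 (@ground_noi E i S' b HS). Qed.

Lemma card_del (E : {fset nat}) i : i \in E -> #|` E| = (#|` E `\ i|).+1.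
Proof. by move=> Hi; rewrite (cardfsD1 i E) Hi. Qed.

Lemma sumU1 (R : comRingType) (u v T : R) : v * T + T + u * T = (u + v + 1) * T.
Proof. ring. Qed.
Lemma sumU2 (R : comRingType) (u v T : R) : T + v * T + u * T = (u + v + 1) * T.
Proof. ring. Qed.

Theorem proposition3p1 (E : {fset nat}) (F : {fset {fset elt}}) :
  (0%N \notin E) ->
  is_delta_matroid E F ->
  (E = fset0 -> Upoly E F = 1) /\
  (forall i : nat, i \in E ->
     (~~ is_loop F i -> ~~ is_coloop F i ->
        Upoly E F = Upoly (E `\ i) (contract F i) + Upoly (E `\ i) (delete F i)
                    + uvar * Upoly (E `\ i) (minor_mid F i)) /\
     (is_loop F i || is_coloop F i ->
        Upoly E F = (uvar + vvar + 1) * Upoly (E `\ i) (delete F i))).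
Proof.
move=> _ HD; split; first by move=> e; subst E; exact: Upoly0.
move=> i Hi; split.
  move=> Hnl Hnc.
  have [B1 HB1 Hb1] : exists2 B, B \in F & (i, false) \in B.
    move: Hnl; rewrite /is_loop negb_forall => /existsP [[B HB] /= h].
    by exists B => //; rewrite negbK in h.
  have [B2 HB2 Hb2] : exists2 B, B \in F & (i, true) \in B.
    move: Hnc; rewrite /is_coloop negb_forall => /existsP [[B HB] /= h].
    exists B => //; have [HaB HcB] := dm_feas HD HB.
    by move: (@feas_cover E B HaB HcB i Hi); rewrite (negbTE h).
  rewrite /contract /delete (negbTE Hnl) (negbTE Hnc) /=.
  rewrite /Upoly (AdS_split _ _ _ _ Hi) mulr_sumr -!big_split /= big_seq [RHS]big_seq.
  apply: eq_bigr => S' HS'; rewrite inAdS in HS'.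
  have HS := proj1 (admP _ _ HS').
  have hc := @card_adm _ _ HS'.
  congr (_ + _ + _).
  - apply: T1; [exact: (@card_del E i Hi)|exact: (@card_ext E i false S' HS)|].
    exact: (@rank_nonloop E F i HD Hi false S' HS (ex_intro2 _ _ B1 HB1 Hb1)).
  - apply: T1; [exact: (@card_del E i Hi)|exact: (@card_ext E i true S' HS)|].
    exact: (@rank_nonloop E F i HD Hi true S' HS (ex_intro2 _ _ B2 HB2 Hb2)).
  - apply: T3 => //; first exact: (@card_del E i Hi).
    exact: (@rank_mid E F i HD S' HS).
move=> Hlc.
have [t Ht] : exists t, forall B, B \in F -> (i, t) \in B.
  case/orP: Hlc => /forallP H.
    exists true => B HB; have /= h := H [` HB].
    have [HaB HcB] := dm_feas HD HB.
    by move: (@feas_cover E B HaB HcB i Hi); rewrite (negbTE h).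
  by exists false => B HB; exact: (H [` HB]).
rewrite /delete Hlc /Upoly (AdS_split _ _ _ _ Hi) mulr_sumr big_seq [RHS]big_seq.
apply: eq_bigr => S' HS'; rewrite inAdS in HS'.
have HS := proj1 (admP _ _ HS').
have hc := @card_adm _ _ HS'.
have hr := @rank_le_card (minor_mid F i) S' _ HS.
pose T := uvar ^+ (#|` E `\ i| - #|` S'|) * vvar ^+ (absz (Posz #|` S'| - rankD (minor_mid F i) S') %/ 2).
have A : forall b, b = t ->
    uvar ^+ (#|` E| - #|` (i, b) |` S'|) *
    vvar ^+ (absz (Posz #|` (i, b) |` S'| - rankD F ((i, b) |` S')) %/ 2) = T.
  move=> b eb; apply: T1; [exact: (@card_del E i Hi)|exact: (@card_ext E i b S' HS)|].
  by rewrite (@rank_loop E F i HD Hi b t S' HS Ht) eb sg_sq.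
have B : forall b, b = ~~ t ->
    uvar ^+ (#|` E| - #|` (i, b) |` S'|) *
    vvar ^+ (absz (Posz #|` (i, b) |` S'| - rankD F ((i, b) |` S')) %/ 2) = vvar * T.
  move=> b eb; apply: T2; [exact: (@card_del E i Hi)|exact: (@card_ext E i b S' HS)| |exact: hr].
  by rewrite (@rank_loop E F i HD Hi b t S' HS Ht) eb sg_neg mulNr sg_sq.
have C : uvar ^+ (#|` E| - #|` S'|) *
    vvar ^+ (absz (Posz #|` S'| - rankD F S') %/ 2) = uvar * T.
  apply: T3 => //; first exact: (@card_del E i Hi).
  exact: (@rank_mid E F i HD S' HS).
rewrite C; case: t Ht A B => Ht A B.
  by rewrite (A true) // (B false) // sumU1.
by rewrite (A false) // (B true) // sumU2.
Qed.
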